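(* Let $Y$ be a complex Banach space, let $I'\subseteq I\subseteq\mathbb R^n$ with $I+I'\subseteq I$ and $I'$ unbounded, let $F:I\to Y$ be uniformly continuous and Bohr $I'$-almost periodic (respectively, uniformly continuous and $I'$-uniformly recurrent), let $S\subseteq\mathbb R^n$ be bounded, and assume: (AP-E) for every $\mathbf t'\in\mathbb R^n$ there exists a finite $M>0$ such that $\mathbf t'+I'_M\subseteq I$. Set $\Omega_S:=[(I'\cup(-I'))+(I'\cup(-I'))]\cup S$. Then there exists a uniformly continuous, Bohr $\Omega_S$-almost periodic (respectively, uniformly continuous, $\Omega_S$-uniformly recurrent) function $\tilde F:\mathbb R^n\to Y$ with $\tilde F(\mathbf t)=F(\mathbf t)$ for all $\mathbf t\in I$; moreover, in the almost periodic case, such a function $\tilde F$ is unique provided that $\mathbb R^n\setminus\Omega_S$ is bounded.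
   Context: $I'_M:=\{\lambda\in I':|\lambda|\ge M\}$; $B(\mathbf t_0,l)$ is the closed Euclidean ball. For $J'\subseteq J\subseteq\mathbb R^n$ with $J+J'\subseteq J$, a continuous $G:J\to Y$ is Bohr $J'$-almost periodic if for every $\epsilon>0$ there exists $l>0$ such that for each $\mathbf t_0\in J'$ there exists $\tau\in B(\mathbf t_0,l)\cap J'$ with $\|G(\mathbf t+\tau)-G(\mathbf t)\|_Y\le\epsilon$ for all $\mathbf t\in J$; $G$ is $J'$-uniformly recurrent if there is a sequence $(\tau_k)$ in $J'$ with $|\tau_k|\to\infty$ and $\lim_{k\to\infty}\sup_{\mathbf t\in J}\|G(\mathbf t+\tau_k)-G(\mathbf t)\|_Y=0$. (Here these notions are applied with $J=I$, $J'=I'$, and with $J=\mathbb R^n$, $J'=\Omega_S$.) *)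

(* Defs.v *)
From HB Require Import structures.
From mathcomp Require Import all_boot all_order all_algebra.
From mathcomp Require Import all_classical all_reals all_analysis.
From mathcomp Require Import complex.
Set Implicit Arguments. Unset Strict Implicit. Unset Printing Implicit Defensive.
Import Order.TTheory GRing.Theory Num.Theory.
Import numFieldNormedType.Exports.
Local Open Scope classical_set_scope.
Local Open Scope ring_scope.
Local Open Scope complex_scope.

(* Points of R^n are row vectors 'rV[R]_n; Y is a complex Banach space,
   i.e. a complete normed module over R[i] = complex R.  Its norm `|y|
   takes values in R[i] (with zero imaginary part); bounds are written
   `|y| <= e%:C with e : R. *)

Section Defs.
Variables (R : realType) (Y : completeNormedModType R[i]) (n : nat).
Local Notation vec := 'rV[R]_n.

Definition enorm (t : vec) : R := Num.sqrt (\sum_(i < n) t ord0 i ^+ 2).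

Definition ebounded (A : set vec) : Prop :=
  exists M : R, forall x, A x -> enorm x <= M.

Definition setM (I' : set vec) (M : R) : set vec :=
  [set l | I' l /\ M <= enorm l].

Definition msum (A B : set vec) : set vec :=
  [set x | exists a b, A a /\ B b /\ x = a + b].

Definition symset (J : set vec) : set vec := [set x | J x \/ J (- x)].

Definition OmegaS (I' S : set vec) : set vec :=
  msum (symset I') (symset I') `|` S.

Definition cont_on (J : set vec) (G : vec -> Y) : Prop :=
  forall t, J t -> forall eps : R, 0 < eps -> exists delta : R, 0 < delta /\
    forall s, J s -> enorm (s - t) < delta -> `|G s - G t| <= eps%:C.

Definition unif_cont_on (J : set vec) (G : vec -> Y) : Prop :=
  forall eps : R, 0 < eps -> exists delta : R, 0 < delta /\
    forall t s, J t -> J s -> enorm (t - s) < delta -> `|G t - G s| <= eps%:C.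

Definition bohr_ap (J J' : set vec) (G : vec -> Y) : Prop :=
  cont_on J G /\
  forall eps : R, 0 < eps -> exists l : R, 0 < l /\
    forall t0, J' t0 -> exists tau, J' tau /\ enorm (tau - t0) <= l /\
      forall t, J t -> `|G (t + tau) - G t| <= eps%:C.

(* J'-uniform recurrence of a continuous G : J -> Y;
   the condition  sup_{t in J} ||G(t+tau_k) - G(t)|| -> 0  is unfolded. *)
Definition unif_rec (J J' : set vec) (G : vec -> Y) : Prop :=
  cont_on J G /\
  exists tau : nat -> vec, (forall k, J' (tau k)) /\
    (forall M : R, exists N : nat, forall k, (N <= k)%N -> M <= enorm (tau k)) /\
    (forall eps : R, 0 < eps -> exists N : nat, forall k, (N <= k)%N ->
       forall t, J t -> `|G (t + tau k) - G t| <= eps%:C).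

End Defs.

(* Main.v *)
Require Import Defs.
From HB Require Import structures.
From mathcomp Require Import all_boot all_order all_algebra.
From mathcomp Require Import all_classical all_reals all_analysis.
From mathcomp Require Import complex.
From mathcomp Require Import ring lra.
Set Implicit Arguments. Unset Strict Implicit. Unset Printing Implicit Defensive.
Import Order.TTheory GRing.Theory Num.Theory.
Import numFieldNormedType.Exports.
Local Open Scope classical_set_scope.
Local Open Scope ring_scope.
Local Open Scope complex_scope.
Section NM.
Variables (R : realType) (Y : completeNormedModType R[i]).

Definition nm (y : Y) : R := complex.Re `|y|.

Lemma nmE y : `|y| = (nm y)%:C.
Proof. by rewrite /nm RRe_real // normr_real. Qed.

Lemma nm_le y e : (`|y| <= e%:C) = (nm y <= e).
Proof. by rewrite nmE lecR. Qed.

Lemma nm_lt y e : (`|y| < e%:C) = (nm y < e).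
Proof. by rewrite nmE ltcR. Qed.

Lemma nm_ge0 y : 0 <= nm y.
Proof. by rewrite -ler0c -nmE normr_ge0. Qed.

Lemma nmD a b : nm (a + b) <= nm a + nm b.
Proof.
have := ler_normD a b; rewrite !nmE.
have -> : (nm a)%:C + (nm b)%:C = (nm a + nm b)%:C :> R[i] by rewrite rmorphD.
by rewrite lecR.
Qed.

Lemma nmC a b : nm (a - b) = nm (b - a).
Proof. by rewrite /nm distrC. Qed.

Lemma nm0 : nm 0 = 0.
Proof. by rewrite /nm normr0. Qed.

Lemma nm_eq0 a : nm a = 0 -> a = 0.
Proof. by move=> h; apply/normr0_eq0; rewrite nmE h. Qed.

Lemma nm_tri a b c : nm (a - c) <= nm (a - b) + nm (b - c).
Proof. by have := nmD (a - b) (b - c); rewrite addrA subrK. Qed.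

Lemma nm_small a : (forall e : R, 0 < e -> nm a <= e) -> a = 0.
Proof.
move=> h; apply: nm_eq0; apply/eqP; rewrite eq_le nm_ge0 andbT.
by apply/ler_addgt0Pr => e /h; rewrite add0r.
Qed.

Lemma le_small (x y : R) : (forall e : R, 0 < e -> x <= y + e) -> x <= y.
Proof. by move=> h; apply/ler_addgt0Pr => e /h. Qed.

End NM.
Section EN.
Variables (R : realType) (n : nat).
Local Notation vec := 'rV[R]_n.
Local Notation en := (@enorm R n).

Lemma en_ge0 x : 0 <= en x.
Proof. exact: sqrtr_ge0. Qed.

Lemma sum_sq_ge0 (x : vec) : 0 <= \sum_(i < n) x ord0 i ^+ 2.
Proof. by apply: sumr_ge0 => i _; rewrite sqr_ge0. Qed.

Lemma enN (x : vec) : en (- x) = en x.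
Proof. by rewrite /enorm; congr Num.sqrt; apply: eq_bigr => i _; rewrite mxE sqrrN. Qed.

Lemma enC (x : vec) y : en (x - y) = en (y - x).
Proof. by rewrite -enN opprB. Qed.

Lemma en_coord (x : vec) i : `|x ord0 i| <= en x.
Proof.
rewrite /enorm -sqrtr_sqr ler_sqrt; last exact: sum_sq_ge0.
rewrite (bigD1 i) //= lerDl; apply: sumr_ge0 => j _; exact: sqr_ge0.
Qed.

Lemma sum_sq_le_sq (r : seq 'I_n) (f : 'I_n -> R) : (forall i, 0 <= f i) ->
  \sum_(i <- r) f i ^+ 2 <= (\sum_(i <- r) f i) ^+ 2.
Proof.
move=> f0; elim: r => [|a r IH]; first by rewrite !big_nil expr0n.
rewrite !big_cons.
have s0 : 0 <= \sum_(i <- r) f i by apply: sumr_ge0.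
have := f0 a; nra.
Qed.

Lemma en_le_sum (x : vec) : en x <= \sum_(i < n) `|x ord0 i|.
Proof.
have s0 : 0 <= \sum_(i < n) `|x ord0 i| by apply: sumr_ge0.
rewrite /enorm -[X in _ <= X](ger0_norm s0) -sqrtr_sqr ler_sqrt; last exact: sqr_ge0.
apply: le_trans (@sum_sq_le_sq (index_enum _) (fun i => `|x ord0 i|) (fun i => normr_ge0 _)).
rewrite (eq_bigr (fun i => `|x ord0 i| ^+ 2)) // => i _.
by rewrite real_normK ?num_real.
Qed.

Lemma cauchy_schwarz (a b : 'I_n -> R) :
  (\sum_(i < n) a i * b i) ^+ 2 <=
  (\sum_(i < n) a i ^+ 2) * (\sum_(i < n) b i ^+ 2).
Proof.
set A := \sum_(i < n) a i ^+ 2; set B := \sum_(i < n) b i ^+ 2.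
set C := \sum_(i < n) a i * b i.
have E1 : A * B = \sum_(i < n) \sum_(j < n) a i ^+ 2 * b j ^+ 2.
  by rewrite /A mulr_suml; apply: eq_bigr => i _; rewrite mulr_sumr.
have E1' : A * B = \sum_(i < n) \sum_(j < n) a j ^+ 2 * b i ^+ 2.
  rewrite mulrC /B mulr_suml; apply: eq_bigr => i _; rewrite mulr_sumr.
  by apply: eq_bigr => j _; rewrite mulrC.
have E2 : C ^+ 2 = \sum_(i < n) \sum_(j < n) (a i * b i) * (a j * b j).
  by rewrite expr2 /C mulr_suml; apply: eq_bigr => i _; rewrite mulr_sumr.
have E : \sum_(i < n) \sum_(j < n) (a i * b j - a j * b i) ^+ 2 =
         A * B + A * B - 2 * C ^+ 2.
  rewrite {1}E1 {1}E1' E2 -big_split /= mulr_sumr -sumrB.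
  apply: eq_bigr => i _; rewrite -big_split /= mulr_sumr -sumrB.
  by apply: eq_bigr => j _; ring.
have : 0 <= \sum_(i < n) \sum_(j < n) (a i * b j - a j * b i) ^+ 2.
  by apply: sumr_ge0 => i _; apply: sumr_ge0 => j _; apply: sqr_ge0.
rewrite E; lra.
Qed.

Lemma enD (x : vec) y : en (x + y) <= en x + en y.
Proof.
rewrite /enorm.
set A := \sum_(i < n) x ord0 i ^+ 2; set B := \sum_(i < n) y ord0 i ^+ 2.
set C := \sum_(i < n) x ord0 i * y ord0 i.
have A0 : 0 <= A by exact: sum_sq_ge0.
have B0 : 0 <= B by exact: sum_sq_ge0.
have -> : \sum_(i < n) (x + y) ord0 i ^+ 2 = A + C *+ 2 + B.
  rewrite /A /B /C -sumrMnl -big_split -big_split /=.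
  by apply: eq_bigr => i _; rewrite mxE sqrrD.
have hC : C <= Num.sqrt A * Num.sqrt B.
  apply: le_trans (ler_norm C) _.
  rewrite -sqrtr_sqr -sqrtrM // ler_sqrt; last by rewrite mulr_ge0.
  exact: cauchy_schwarz.
have sA := sqr_sqrtr A0; have sB := sqr_sqrtr B0.
have sA0 := sqrtr_ge0 A; have sB0 := sqrtr_ge0 B.
rewrite -(ger0_norm (addr_ge0 sA0 sB0)) -sqrtr_sqr ler_sqrt; last exact: sqr_ge0.
rewrite sqrrD sA sB; lra.
Qed.

Lemma en_tri (x : vec) y z : en (x - z) <= en (x - y) + en (y - z).
Proof. by have := enD (x - y) (y - z); rewrite addrA subrK. Qed.

Lemma en_double (x : vec) : en x <= en (x + x).
Proof.
rewrite /enorm ler_sqrt; last exact: sum_sq_ge0.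
apply: ler_sum => i _; rewrite mxE; nra.
Qed.

Lemma en_addK (t s p : vec) : en ((t + p) - (s + p)) = en (t - s).
Proof. by congr en; rewrite opprD addrACA subrr addr0. Qed.

End EN.
Section Gen.
Variables (R : realType) (Y : completeNormedModType R[i]) (n : nat).
Local Notation vec := 'rV[R]_n.

Lemma ev_ge (M : R) : \forall k \near \oo, M <= k%:R.
Proof.
exists (Num.Def.archi_bound `|M|) => // k /= hk.
apply: le_trans (ler_norm M) _; apply: ltW.
apply: lt_le_trans (archi_boundP (normr_ge0 M)) _.
by rewrite ler_nat.
Qed.

Definition ek (k : nat) : R := (k.+1%:R)^-1.

Lemma ek_gt0 k : 0 < ek k.
Proof. by rewrite /ek invr_gt0 ltr0n. Qed.

Lemma ev_ek (e : R) : 0 < e -> \forall k \near \oo, ek k <= e.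
Proof.
move=> e0; have := near_infty_natSinv_lt (PosNum e0).
by apply: filterS => k /ltW.
Qed.

Lemma ex_nat (P : nat -> Prop) : (\forall k \near \oo, P k) -> exists k, P k.
Proof. by move=> [N _ H]; exists N; apply: H => /=. Qed.

Lemma perN (H : vec -> Y) p eps : (forall t, nm (H (t + p) - H t) <= eps) ->
  forall t, nm (H (t - p) - H t) <= eps.
Proof. by move=> h t; rewrite nmC; have := h (t - p); rewrite subrK. Qed.

Lemma perD (H : vec -> Y) p q e1 e2 : (forall t, nm (H (t + p) - H t) <= e1) ->
  (forall t, nm (H (t + q) - H t) <= e2) ->
  forall t, nm (H (t + (p + q)) - H t) <= e1 + e2.
Proof.
move=> hp hq t; rewrite addrA [e1 + e2]addrC.
apply: le_trans (nm_tri _ (H (t + p)) _) _; apply: lerD; [exact: hq|exact: hp].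
Qed.

Lemma real_pos (eps : R[i]) : 0 < eps -> exists r : R, 0 < r /\ eps = r%:C.
Proof.
move=> e0; exists (complex.Re eps).
have er : eps = (complex.Re eps)%:C by rewrite RRe_real // gtr0_real.
split => //; move: e0; rewrite {1}er.
by rewrite ltcE /= => /andP[].
Qed.

End Gen.
Section Ext.
Variables (R : realType) (Y : completeNormedModType R[i]) (n : nat).
Local Notation vec := 'rV[R]_n.
Local Notation en := (@enorm R n).
Variables (I I' : set vec) (F : vec -> Y).
Hypothesis Hadd : forall t l, I t -> I' l -> I (t + l).
Hypothesis HAPE : forall t' : vec, exists M : R, 0 < M /\
  forall l, setM I' M l -> I (t' + l).
Hypothesis HP : forall (eps M : R), 0 < eps -> exists tau, I' tau /\ M <= en tau /\
   forall t, I t -> nm (F (t + tau) - F t) <= eps.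
Hypothesis Huc : forall eps : R, 0 < eps -> exists delta : R, 0 < delta /\
   forall t s, I t -> I s -> en (t - s) < delta -> nm (F t - F s) <= eps.

Lemma HPk k : exists tau, I' tau /\ k%:R <= en tau /\
  forall t, I t -> nm (F (t + tau) - F t) <= ek R k.
Proof. exact: HP (ek_gt0 R k). Qed.

Definition tau k := projT1 (cid (HPk k)).

Lemma tauP k : I' (tau k) /\ k%:R <= en (tau k) /\
  forall t, I t -> nm (F (t + tau k) - F t) <= ek R k.
Proof. exact: projT2 (cid (HPk k)). Qed.

Definition Mt (t : vec) : R := projT1 (cid (HAPE t)).

Lemma MtP t l : I' l -> Mt t <= en l -> I (t + l).
Proof. by move=> h1 h2; have [_ H] := projT2 (cid (HAPE t)); apply: H. Qed.

Lemma in_I t k : Mt t <= k%:R -> I (t + tau k).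
Proof.
by move=> h; case: (tauP k) => h1 [h2 _]; apply: MtP => //; apply: le_trans h2.
Qed.

Definition u t k := F (t + tau k).

Lemma u_bound t j k : Mt t <= j%:R -> Mt t <= k%:R ->
  nm (u t j - u t k) <= ek R j + ek R k.
Proof.
move=> hj hk; have Ij := in_I hj; have Ik := in_I hk.
rewrite /u [ek R j + _]addrC.
apply: le_trans (nm_tri _ (F (t + tau j + tau k)) _) _.
apply: lerD.
- by rewrite nmC; exact: (tauP k).2.2 _ Ij.
- by rewrite (addrAC t (tau j) (tau k)); exact: (tauP j).2.2 _ Ik.
Qed.

Lemma u_cvg t : cvg (u t @ \oo).
Proof.
apply: cauchy_cvg; apply: cauchy_exP => eps eps0.
have [r [r0 ->]] := real_pos eps0.
have [N [h1 h2]] : exists N, Mt t <= N%:R /\ ek R N <= r / 3.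
  apply: ex_nat; near=> N; split; near: N; [exact: ev_ge| apply: ev_ek; lra].
exists (u t N).
suff H : \forall k \near \oo, ball (u t N) r%:C (u t k) by exact: H.
near=> k.
rewrite -ball_normE /ball_ /= nm_lt.
have hk : Mt t <= k%:R by near: k; exact: ev_ge.
apply: le_lt_trans (u_bound h1 hk) _.
have : ek R k <= r / 3 by near: k; apply: ev_ek; lra.
lra.
Unshelve. all: by end_near.
Qed.

Definition Ft t := lim (u t @ \oo).

Lemma Ft_cvg t : u t @ \oo --> Ft t.
Proof. exact: u_cvg. Qed.

Lemma key t rho eps : I (t + rho) ->
  (forall s, I s -> nm (F (s + rho) - F s) <= eps) ->
  nm (F (t + rho) - Ft t) <= eps.
Proof.
move=> Itr Hr; apply: le_small => e e0.
have := @Ft_cvg t; rewrite cvgrPdist_lt => /(_ (e / 2)%:C) H.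
have e20 : 0 < (e / 2)%:C by rewrite ltcR; lra.
have [k [h1 [h2 h3]]] : exists k, Mt t <= k%:R /\ ek R k <= e / 2 /\
    nm (Ft t - u t k) < e / 2.
  apply: ex_nat; near=> k; split; [|split]; near: k.
  - exact: ev_ge.
  - by apply: ev_ek; lra.
  - by apply: filterS (H e20) => k; rewrite nm_lt.
have Ik := in_I h1.
apply: le_trans (nm_tri _ (u t k) _) _.
rewrite nmC in h3.
have : nm (F (t + rho) - u t k) <= ek R k + eps.
  apply: le_trans (nm_tri _ (F (t + rho + tau k)) _) _.
  apply: lerD.
  - by rewrite nmC; exact: (tauP k).2.2 _ Itr.
  - by rewrite /u (addrAC t rho (tau k)); exact: Hr.
lra.
Unshelve. all: by end_near.
Qed.

Lemma Ft_eq t : I t -> Ft t = F t.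
Proof.
move=> It; apply/eqP; rewrite -subr_eq0; apply/eqP; apply: nm_small => e e0.
have [k hk] : exists k, ek R k <= e / 2 by apply: ex_nat; apply: ev_ek; lra.
have Ik : I (t + tau k) by apply: Hadd => //; exact: (tauP k).1.
apply: le_trans (nm_tri _ (F (t + tau k)) _) _.
have h1 : nm (Ft t - F (t + tau k)) <= ek R k.
  by rewrite nmC; apply: key => //; exact: (tauP k).2.2.
have h2 := (tauP k).2.2 _ It.
lra.
Qed.

Lemma Ft_period p eps : I' p -> (forall s, I s -> nm (F (s + p) - F s) <= eps) ->
  forall t, nm (Ft (t + p) - Ft t) <= eps.
Proof.
move=> Ip Hp t; apply: le_small => e e0.
have [k [h1 [h2 h3]]] : exists k, Mt t <= k%:R /\ Mt (t + p) <= k%:R /\ ek R k <= e / 2.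
  apply: ex_nat; near=> k; split; [|split]; near: k;
    [exact: ev_ge|exact: ev_ge|apply: ev_ek; lra].
have I1 := in_I h1; have I2 := in_I h2.
apply: le_trans (nm_tri _ (F (t + p + tau k)) _) _.
have a1 : nm (Ft (t + p) - F (t + p + tau k)) <= ek R k.
  by rewrite nmC; apply: key => //; exact: (tauP k).2.2.
have a2 : nm (F (t + p + tau k) - Ft t) <= eps + ek R k.
  apply: le_trans (nm_tri _ (F (t + tau k)) _) _.
  apply: lerD; last exact: key _ (tauP k).2.2.
  by rewrite (addrAC t p (tau k)); exact: Hp.
lra.
Unshelve. all: by end_near.
Qed.

Lemma Ft_uc eps : 0 < eps -> exists delta : R, 0 < delta /\
  forall t s, en (t - s) < delta -> nm (Ft t - Ft s) <= eps.
Proof.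
move=> e0; have [d [d0 Hd]] := Huc e0; exists d; split => // t s hts.
apply: le_small => e e1.
have [k [h1 [h2 h3]]] : exists k, Mt t <= k%:R /\ Mt s <= k%:R /\ ek R k <= e / 2.
  apply: ex_nat; near=> k; split; [|split]; near: k;
    [exact: ev_ge|exact: ev_ge|apply: ev_ek; lra].
have I1 := in_I h1; have I2 := in_I h2.
apply: le_trans (nm_tri _ (F (t + tau k)) _) _.
have a1 : nm (Ft t - F (t + tau k)) <= ek R k.
  by rewrite nmC; apply: key => //; exact: (tauP k).2.2.
have a2 : nm (F (t + tau k) - Ft s) <= eps + ek R k.
  apply: le_trans (nm_tri _ (F (s + tau k)) _) _.
  apply: lerD; last exact: key _ (tauP k).2.2.
  by apply: Hd => //; rewrite en_addK.
lra.
Unshelve. all: by end_near.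
Qed.

End Ext.
Lemma sub4 (V : zmodType) (x y z w : V) : (x - y) - (z - w) = (x - z) - (y - w).
Proof. by rewrite !opprB !addrA (addrAC x (- y) w) (addrAC x (- z) w) addrAC. Qed.

Lemma addsub (V : zmodType) (t p q : V) : (t + p) - (t + q) = p - q.
Proof. by rewrite opprD addrACA subrr add0r. Qed.

Section Uniq.
Variables (R : realType) (Y : completeNormedModType R[i]) (n : nat).
Local Notation vec := 'rV[R]_n.
Local Notation en := (@enorm R n).
Variables (I I' : set vec) (F : vec -> Y).
Hypothesis Hadd : forall t l, I t -> I' l -> I (t + l).
Hypothesis HAPE : forall t' : vec, exists M : R, 0 < M /\
  forall l, setM I' M l -> I (t' + l).
Hypothesis HP : forall (eps M : R), 0 < eps -> exists tau, I' tau /\ M <= en tau /\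
   forall t, I t -> nm (F (t + tau) - F t) <= eps.

Lemma uniq_ext (S : set vec) (G : vec -> Y) : unif_cont_on setT G ->
  bohr_ap setT (OmegaS I' S) G -> (forall t, I t -> G t = F t) ->
  forall t, G t = Ft HP t.
Proof.
move=> ucG [_ apG] eqG t; apply/eqP; rewrite -subr_eq0; apply/eqP.
apply: nm_small => eta eta0.
pose e := eta / 7; have e0 : 0 < e by rewrite /e; lra.
have [d [d0 Hd]] := ucG _ e0.
have [lG [lG0 HlG]] := apG _ e0.
have [lam Hlam] := choice (fun k : nat => HP (k%:R) e0).
have Om : forall k, OmegaS I' S (lam k + lam k).
  move=> k; left; exists (lam k), (lam k); split; first by left; exact: (Hlam k).1.
  by split => //; left; exact: (Hlam k).1.
have [sig Hsig] := choice (fun k => HlG _ (Om k)).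
pose a k := sig k - (lam k + lam k).
pose K := [set v : vec | forall i, `[- lG, lG]%classic (v ord0 i)].
have cK : compact K.
  by apply: (@rV_compact _ _ (fun=> `[- lG, lG]%classic)) => i; exact: segment_compact.
have FK : (a @ \oo) K.
  exists 0%N => // k _ i /=; rewrite in_itv /= -ler_norml.
  exact: le_trans (en_coord _ _) (Hsig k).2.1.
have [c [_ clc]] := cK _ _ FK.
pose d' := d / (2 * (n%:R + 1)).
have d'0 : 0 < d' by rewrite /d' divr_gt0 // mulr_gt0 // ltr_wpDl.
have near_c : forall N, exists k, (N <= k)%N /\ ball c d' (a k).
  move=> N.
  have h1 : (a @ \oo) [set v | exists k, (N <= k)%N /\ v = a k].
    by exists N => // k /= hk; exists k.
  have [v [[k' [hk ->]] hb]] := clc _ _ h1 (nbhsx_ballx c d' d'0).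
  by exists k'.
have [j [_ hj]] := near_c 0%N.
have [M [M0 HM]] := HAPE (t - (lam j + lam j)).
have [N hN] : exists N : nat, M <= N%:R by apply: ex_nat; exact: ev_ge.
have [k [hk hbk]] := near_c N.
have coord : forall v : vec, ball c d' v -> forall i, `|c ord0 i - v ord0 i| < d'.
  by move=> v [_ hv] i; have := hv ord0 i; rewrite -ball_normE.
have close : en (a k - a j) < d.
  apply: le_lt_trans (en_le_sum _) _.
  apply: (@le_lt_trans _ _ (\sum_(i < n) (2 * d'))).
    apply: ler_sum => i _.
    move: (coord _ hbk i) (coord _ hj i); move: (a k) (a j) => x y hx hy.
    rewrite !mxE; have h1 := ler_distD (c ord0 i) (x ord0 i) (y ord0 i).
    have h2 := ler_distD (c ord0 i) (y ord0 i) (x ord0 i).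
    have hx' : `|x ord0 i - c ord0 i| < d' by rewrite distrC.
    have hy' : `|y ord0 i - c ord0 i| < d' by rewrite distrC.
    lra.
  rewrite sumr_const card_ord -mulr_natr.
  have m0 : 0 <= n%:R :> R by rewrite ler0n.
  have hd' : d' * (2 * (n%:R + 1)) = d.
    by rewrite /d' mulfVK // mulf_neq0 // gt_eqF // ltr_wpDl.
  nra.
have Gper : forall k, forall s, nm (G (s + sig k) - G s) <= e.
  by move=> k' s; rewrite -nm_le; exact: (Hsig k').2.2.
have Fper : forall k, forall s, nm (Ft HP (s + lam k) - Ft HP s) <= e.
  by move=> k'; exact: (Ft_period HAPE HP (Hlam k').1 (Hlam k').2.2).
pose mu := (lam k + lam k) - (lam j + lam j).
pose mu' := sig k - sig j.
have Imu : I (t + mu).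
  have -> : t + mu = (t - (lam j + lam j)) + lam k + lam k.
    by rewrite /mu [_ + _ - _]addrC !addrA.
  apply: Hadd; last exact: (Hlam k).1.
  apply: HM; split; first exact: (Hlam k).1.
  apply: le_trans hN _; apply: le_trans _ (Hlam k).2.1.
  by rewrite ler_nat.
have A1 : nm (G t - G (t + mu')) <= e + e.
  by rewrite nmC; apply: (perD (Gper k)); apply: perN; exact: Gper.
have A2 : nm (G (t + mu') - G (t + mu)) <= e.
  rewrite -nm_le; apply: Hd => //.
  by rewrite addsub /mu' /mu sub4 -/(a k) -/(a j).
have A3 : G (t + mu) = Ft HP (t + mu) by rewrite eqG // Ft_eq.
have A4 : nm (Ft HP (t + mu) - Ft HP t) <= (e + e) + (e + e).
  apply: perD; first exact: perD (Fper k) (Fper k).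
  by apply: perN; apply: perD (Fper j) (Fper j).
apply: le_trans (nm_tri _ (G (t + mu')) _) _.
apply: le_trans (lerD (lexx _) (nm_tri _ (G (t + mu)) _)) _.
rewrite A3 in A2 *; have ee : e = eta / 7 by [].
lra.
Qed.

End Uniq.
Theorem theorem2p35 (R : realType) (Y : completeNormedModType R[i]) (n : nat)
  (I I' S : set 'rV[R]_n) (F : 'rV[R]_n -> Y) :
  I' `<=` I ->
  (forall t l, I t -> I' l -> I (t + l)) ->
  ~ ebounded I' ->
  ebounded S ->
  (* (AP-E) *)
  (forall t' : 'rV[R]_n, exists M : R, 0 < M /\
     forall l, setM I' M l -> I (t' + l)) ->
  (* almost periodic case *)
  ((unif_cont_on I F /\ bohr_ap I I' F) ->
     (exists Ft : 'rV[R]_n -> Y,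
        unif_cont_on setT Ft /\ bohr_ap setT (OmegaS I' S) Ft /\
        forall t, I t -> Ft t = F t) /\
     (ebounded (~` OmegaS I' S) ->
        forall G1 G2 : 'rV[R]_n -> Y,
          unif_cont_on setT G1 -> bohr_ap setT (OmegaS I' S) G1 ->
          (forall t, I t -> G1 t = F t) ->
          unif_cont_on setT G2 -> bohr_ap setT (OmegaS I' S) G2 ->
          (forall t, I t -> G2 t = F t) ->
          forall t, G1 t = G2 t)) /\
  (* uniformly recurrent case *)
  ((unif_cont_on I F /\ unif_rec I I' F) ->
     exists Ft : 'rV[R]_n -> Y,
       unif_cont_on setT Ft /\ unif_rec setT (OmegaS I' S) Ft /\
       forall t, I t -> Ft t = F t).
Proof.
move=> HI'I Hadd Hunb HbS HAPE.
have Hbig : forall M, exists t0, I' t0 /\ M < enorm t0.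
  move=> M; apply: contrapT => h; apply: Hunb; exists M => x Ix.
  rewrite leNgt; apply/negP => hx; apply: h; by exists x.
have [l0 Il0] : exists l0, I' l0 by have [x [Ix _]] := Hbig 0; exists x.
have conv : forall (J : set 'rV[R]_n) (G : 'rV[R]_n -> Y), unif_cont_on J G ->
    forall eps : R, 0 < eps -> exists delta : R, 0 < delta /\
    forall t s, J t -> J s -> enorm (t - s) < delta -> nm (G t - G s) <= eps.
  move=> J G h eps e0; have [d [d0 H]] := h _ e0; exists d; split => //.
  by move=> t s Jt Js hts; rewrite -nm_le; exact: H.
have ucT : forall G : 'rV[R]_n -> Y, (forall eps : R, 0 < eps -> exists delta : R,
    0 < delta /\ forall t s, enorm (t - s) < delta -> nm (G t - G s) <= eps) ->
    unif_cont_on setT G /\ cont_on setT G.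
  move=> G h; split.
    move=> eps e0; have [d [d0 H]] := h _ e0; exists d; split => //.
    by move=> t s _ _ hts; rewrite nm_le; exact: H.
  move=> t _ eps e0; have [d [d0 H]] := h _ e0; exists d; split => //.
  by move=> s _ hts; rewrite nm_le; exact: H.
split.
- move=> [Huc [_ Hap]].
  have HP : forall (eps M : R), 0 < eps -> exists tau, I' tau /\ M <= enorm tau /\
      forall t, I t -> nm (F (t + tau) - F t) <= eps.
    move=> eps M e0; have [l [l0p Hl]] := Hap _ e0.
    have [t0 [It0 ht0]] := Hbig (M + l).
    have [tau [Itau [hd Hp]]] := Hl _ It0.
    exists tau; split => //; split; last by move=> t It; rewrite -nm_le; exact: Hp.
    have := en_tri t0 tau 0; rewrite !subr0 (enC t0 tau); lra.
  have Huc' := conv _ _ Huc.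
  have [ucFt cFt] := ucT _ (Ft_uc HAPE HP Huc').
  have Fper : forall p eps, I' p -> (forall s, I s -> `|F (s + p) - F s| <= eps%:C) ->
      forall t, nm (Ft HP (t + p) - Ft HP t) <= eps.
    move=> p eps Ip Hp; apply: (Ft_period HAPE HP Ip) => s Is; rewrite -nm_le; exact: Hp.
  split.
  + exists (Ft HP); split => //; split; last by move=> t It; exact: Ft_eq.
    split => // eps e0.
    have e20 : 0 < eps / 2 by lra.
    have [l [lp Hl]] := Hap _ e20.
    have [B HB] := HbS.
    exists (2 * l + `|B| + 1); split; first by have := normr_ge0 B; lra.
    have sym : forall a, symset I' a -> exists s, symset I' s /\ enorm (s - a) <= l /\
        forall t, nm (Ft HP (t + s) - Ft HP t) <= eps / 2.
      move=> a [Ia|Ia].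
      * have [s [Is [hs Hs]]] := Hl _ Ia.
        exists s; split; first by left.
        by split => //; apply: Fper => // x Ix; exact: Hs.
      * have [s [Is [hs Hs]]] := Hl _ Ia.
        exists (- s); split; first by right; rewrite opprK.
        split.
          have -> : - s - a = - (s - - a) by rewrite opprD opprK.
          by rewrite enN.
        by apply: perN; apply: Fper => // x Ix; exact: Hs.
    move=> t0 [[a [b [Sa [Sb ->]]]] | St0].
    * have [sa [Ssa [hsa Psa]]] := sym _ Sa.
      have [sb [Ssb [hsb Psb]]] := sym _ Sb.
      exists (sa + sb); split; first by left; exists sa, sb.
      split.
        have -> : sa + sb - (a + b) = (sa - a) + (sb - b) by rewrite opprD addrACA.
        apply: le_trans (enD _ _) _; have := normr_ge0 B; lra.
      move=> t _; rewrite nm_le; apply: le_trans (perD Psa Psb t) _; lra.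
    * exists (l0 + - l0); split.
        left; exists l0, (- l0); split; first by left.
        by split => //; right; rewrite opprK.
      split.
        rewrite subrr sub0r enN; have := HB _ St0; have := ler_norm B; lra.
      by move=> t _; rewrite subrr addr0 subrr normr0 ler0c ltW.
  + move=> _ G1 G2 uc1 ap1 e1 uc2 ap2 e2 t.
    by rewrite (uniq_ext Hadd HAPE HP uc1 ap1 e1) (uniq_ext Hadd HAPE HP uc2 ap2 e2).
- move=> [Huc [_ [tau0 [Itau [Hgrow Hsmall]]]]].
  have HP : forall (eps M : R), 0 < eps -> exists tau, I' tau /\ M <= enorm tau /\
      forall t, I t -> nm (F (t + tau) - F t) <= eps.
    move=> eps M e0; have [N1 h1] := Hgrow M; have [N2 h2] := Hsmall _ e0.
    exists (tau0 (maxn N1 N2)); split; first exact: Itau.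
    split; first by apply: h1; rewrite leq_maxl.
    by move=> t It; rewrite -nm_le; apply: h2 => //; rewrite leq_maxr.
  have Huc' := conv _ _ Huc.
  have [ucFt cFt] := ucT _ (Ft_uc HAPE HP Huc').
  exists (Ft HP); split => //; split; last by move=> t It; exact: Ft_eq.
  split => //; exists (fun k => tau0 k + tau0 k); split.
    by move=> k; left; exists (tau0 k), (tau0 k); split; [left|split; [left|]].
  split.
    move=> M; have [N h] := Hgrow M; exists N => k hk.
    exact: le_trans (h k hk) (en_double _).
  move=> eps e0; have e20 : 0 < eps / 2 by lra.
  have [N h] := Hsmall _ e20; exists N => k hk t _.
  have P : forall t, nm (Ft HP (t + tau0 k) - Ft HP t) <= eps / 2.
    apply: (Ft_period HAPE HP (Itau k)) => s Is; rewrite -nm_le; exact: h.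
  rewrite nm_le; apply: le_trans (perD P P t) _; lra.
Qed.
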